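(* Let $G=(V,E)$ be a complete (directed or undirected) graph on $n$ vertices with cost function $c: V\times V\to\mathbb{R}$, and let $k,l$ be integers with $1\le k<l\le n$. Suppose there are no vertices $a,b,w\in V$ with $b\neq w$ and $c(a,b)=c(a,w)$. Then the length of the tour returned by $l$-RNN on $G$ is less than or equal to the length of the tour returned by $k$-RNN on $G$.
   Context: A tour is an ordering $T=(v_1,\dots,v_n)$ of all vertices of $V$ (a Hamiltonian cycle); its length is $\sum_{i=1}^{n-1} c(v_i,v_{i+1}) + c(v_n,v_1)$. For an integer $k\ge 1$, the $k$-Repetitive-Nearest-Neighbor ($k$-RNN) algorithm works as follows. Step 1: for every ordered sequence $(v_1,\dots,v_k)$ of $k$ distinct vertices, form the partial tour $T=(v_1,\dots,v_k)$ and mark these vertices visited. Step 2: set $i=k$; while unvisited vertices remain, let $v_{i+1}$ be an unvisited vertex minimizing $c(v_i,\cdot)$ over unvisited vertices (if there are several, any one is chosen), append $v_{i+1}$ to $T$, mark it visited, and increment $i$. Step 3: among all $\frac{n!}{(n-k)!}$ tours so constructed, return one of minimum length. The result of a run is the length of the returned tour. *)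

(* Defs.v *)
From mathcomp Require Import all_boot all_order all_algebra.
Set Implicit Arguments. Unset Strict Implicit. Unset Printing Implicit Defensive.
Import Order.TTheory GRing.Theory Num.Theory.
Local Open Scope ring_scope.

Section RNN.
Variables (R : realFieldType) (V : finType) (c : V -> V -> R).

Definition tour_len (T : seq V) : R :=
  \sum_(e <- zip T (rot 1 T)) c e.1 e.2.

(* T is a possible outcome of Step 2 of k-RNN started from the partial
   tour p: T is an ordering of all vertices, starts with p, and every
   vertex appended after the first k positions is an unvisited vertex
   minimising the cost from the current (last) vertex over all unvisited
   vertices (ties broken arbitrarily). *)
Definition nn_completion (k : nat) (p T : seq V) : Prop :=
  [/\ uniq T, size T = #|V|, take k T = p &
      forall (pre post : seq V) (a b : V),
        T = pre ++ a :: b :: post -> (k <= size (rcons pre a))%N ->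
        forall w : V, w \notin rcons pre a -> c a b <= c a w].

(* A run of k-RNN: for each ordered sequence of k distinct vertices,
   the tour constructed from it (one choice among ties). *)
Definition rnn_run (k : nat) (run : seq V -> seq V) : Prop :=
  forall p : seq V, uniq p -> size p = k -> nn_completion k p (run p).

Definition rnn_result (k : nat) (run : seq V -> seq V) (x : R) : Prop :=
  (exists2 p : seq V, uniq p /\ size p = k & x = tour_len (run p)) /\
  (forall p : seq V, uniq p -> size p = k -> x <= tour_len (run p)).

End RNN.

(* Main.v *)
Require Import Defs.
From mathcomp Require Import all_boot all_order all_algebra.
Import Order.TTheory GRing.Theory Num.Theory.
Local Open Scope ring_scope.

Lemma split_at (V : eqType) (T : seq V) x0 i : (0 < i)%N -> (i < size T)%N ->
  T = take i.-1 T ++ nth x0 T i.-1 :: nth x0 T i :: drop i.+1 T.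
Proof.
move=> i0 iT.
rewrite -drop_nth // -[in drop i _](prednK i0) -drop_nth ?cat_take_drop //.
by rewrite (ltn_trans _ iT) // prednK.
Qed.

Lemma nn_unique (R : realFieldType) (V : finType) (c : V -> V -> R)
  k1 k2 p1 p2 T1 T2 :
  (1 <= k2)%N -> (k1 <= k2)%N ->
  ~ (exists a b w : V, b != w /\ c a b = c a w) ->
  nn_completion c k1 p1 T1 -> nn_completion c k2 p2 T2 ->
  take k2 T1 = p2 -> T1 = T2.
Proof.
move=> k20 k12 noties [u1 s1 t1 h1] [u2 s2 t2 h2] tk.
case E: T1 s1 => [|x0 T1'] s1; first by apply/esym/size0nil; rewrite s2 -s1.
rewrite -E; move: s1; rewrite -E => s1.
apply: (@eq_from_nth _ x0); first by rewrite s1 s2.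
elim/ltn_ind => i IH iT.
case: (ltnP i k2) => ik.
  by rewrite -(nth_take x0 ik) tk -t2 nth_take.
have i0 : (0 < i)%N by apply: leq_trans ik.
have iT2 : (i < size T2)%N by rewrite s2 -s1.
have eqt : take i T1 = take i T2.
  apply: (@eq_from_nth _ x0); first by rewrite !size_take iT iT2.
  move=> j; rewrite size_take iT => ji.
  by rewrite !nth_take // IH // (ltn_trans ji).
have tk1 : take i T1 = rcons (take i.-1 T1) (nth x0 T1 i.-1).
  by rewrite -take_nth ?prednK // ltnW.
have tk2 : take i T2 = rcons (take i.-1 T2) (nth x0 T2 i.-1).
  by rewrite -take_nth ?prednK // ltnW.
have notin (T : seq V) : uniq T -> (i < size T)%N -> nth x0 T i \notin take i T.
  move=> uT iT'; move: uT; rewrite -{1}(cat_take_drop i T) cat_uniq => /and3P[_ hd _].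
  apply/negP => hin; move/hasP: hd; apply; exists (nth x0 T i) => //.
  by rewrite (drop_nth x0 iT') mem_head.
have le1 : c (nth x0 T1 i.-1) (nth x0 T1 i) <= c (nth x0 T1 i.-1) (nth x0 T2 i).
  apply: (h1 _ _ _ _ (@split_at _ _ x0 _ i0 iT)).
    by rewrite -tk1 size_take iT (leq_trans k12).
  by rewrite -tk1 eqt notin.
have le2 : c (nth x0 T2 i.-1) (nth x0 T2 i) <= c (nth x0 T2 i.-1) (nth x0 T1 i).
  apply: (h2 _ _ _ _ (@split_at _ _ x0 _ i0 iT2)).
    by rewrite -tk2 size_take iT2.
  by rewrite -tk2 -eqt notin.
have ea : nth x0 T2 i.-1 = nth x0 T1 i.-1 by rewrite IH ?(leq_ltn_trans (leq_pred i) iT) // prednK.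
rewrite ea in le2.
apply/eqP; apply/negPn/negP => ne; apply: noties.
exists (nth x0 T1 i.-1), (nth x0 T1 i), (nth x0 T2 i); split => //.
by apply/eqP; rewrite eq_le le1 le2.
Qed.

Theorem theorem1 (R : realFieldType) (V : finType) (n : nat)
    (c : V -> V -> R) (k l : nat) :
  #|V| = n ->
  (1 <= k)%N -> (k < l)%N -> (l <= n)%N ->
  ~ (exists a b w : V, b != w /\ c a b = c a w) ->
  forall (runl runk : seq V -> seq V) (xl xk : R),
    rnn_run c l runl -> rnn_result c l runl xl ->
    rnn_run c k runk -> rnn_result c k runk xk ->
    xl <= xk.
Proof.
move=> Vn k1 kl ln noties runl runk xl xk hl [_ rl] hk [[p [up sp] ->] _].
have nk := hk p up sp.
have [u s _ _] := nk.
have upl : uniq (take l (runk p)) by rewrite take_uniq.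
have spl : size (take l (runk p)) = l by rewrite size_take s Vn ltn_neqAle ln andbT; case: eqP => // ->.
have nl := hl _ upl spl.
have e := @nn_unique _ _ _ _ _ _ _ _ _ (leq_trans k1 (ltnW kl)) (ltnW kl) noties nk nl erefl.
by rewrite e; apply: rl.
Qed.
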